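(* The logic $\mathbf{IL}^-(\mathbf{J2}_{+},\mathbf{J5})$ does not have the finite model property with respect to simplified $\mathbf{IL}^-(\mathbf{J2}_{+},\mathbf{J5})$-frames: there exists a modal formula $A$ with $\mathbf{IL}^-(\mathbf{J2}_{+},\mathbf{J5})\nvdash A$ such that $A$ is valid in every finite simplified $\mathbf{IL}^-(\mathbf{J2}_{+},\mathbf{J5})$-frame.
   Context: Modal formulas are built from propositional variables, $\top$, $\bot$ using $\to,\lor,\land$, unary $\Box$ and binary $\rhd$; $\lnot A:=A\to\bot$, $\Diamond A:=\lnot\Box\lnot A$. The logic $\mathbf{IL}^-$ has as axioms all tautologies, $\Box(A\to B)\to(\Box A\to\Box B)$, $\Box(\Box A\to A)\to\Box A$, $(A\rhd C)\land(B\rhd C)\to(A\lor B)\rhd C$, and $\Box\lnot A\leftrightarrow A\rhd\bot$; its rules are modus ponens, necessitation, from $A\to B$ infer $C\rhd A\to C\rhd B$, and from $A\to B$ infer $B\rhd C\to A\rhd C$. $\mathbf{IL}^-(\mathbf{J2}_{+},\mathbf{J5})$ is $\mathbf{IL}^-$ plus the axiom schemes $A\rhd(B\lor C)\land B\rhd C\to A\rhd C$ and $\Diamond A\rhd A$. A simplified $\mathbf{IL}^-(\mathbf{J2}_{+},\mathbf{J5})$-frame is a triple $(W,R,S)$ with $W$ non-empty, $R$ a transitive, conversely well-founded binary relation on $W$, and $S$ a transitive binary relation on $W$ with $R\subseteq S$; it is finite if $W$ is finite. Forcing: arbitrary on variables, Boolean clauses as usual, $x\Vdash\Box A$ iff $y\Vdash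 A$ for all $y$ with $xRy$, and $x\Vdash A\rhd B$ iff for every $y$ with $xRy$ and $y\Vdash A$ there is $z$ with $xRz$, $ySz$, $z\Vdash B$. $A$ is valid in a frame if it is forced at every point under every forcing relation. *)

(* Defs.v *)
From mathcomp Require Import all_boot.

Set Implicit Arguments.
Unset Strict Implicit.
Unset Printing Implicit Defensive.

Inductive formula : Type :=
| Var : nat -> formula
| Top : formula
| Bot : formula
| Imp : formula -> formula -> formula
| Or  : formula -> formula -> formula
| And : formula -> formula -> formula
| Box : formula -> formula
| Rhd : formula -> formula -> formula.

Definition Neg (A : formula) : formula := Imp A Bot.
Definition Dia (A : formula) : formula := Neg (Box (Neg A)).
Definition Iff (A B : formula) : formula := And (Imp A B) (Imp B A).

Fixpoint peval (v : formula -> bool) (A : formula) : bool :=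
  match A with
  | Var _ => v A
  | Top => true
  | Bot => false
  | Imp B C => (~~ peval v B) || peval v C
  | Or B C => peval v B || peval v C
  | And B C => peval v B && peval v C
  | Box _ => v A
  | Rhd _ _ => v A
  end.

Definition tautology (A : formula) : Prop := forall v, peval v A.

Inductive IL_J2p_J5 : formula -> Prop :=
| ax_taut A : tautology A -> IL_J2p_J5 A
| ax_K A B : IL_J2p_J5 (Imp (Box (Imp A B)) (Imp (Box A) (Box B)))
| ax_L A : IL_J2p_J5 (Imp (Box (Imp (Box A) A)) (Box A))
| ax_J3 A B C : IL_J2p_J5 (Imp (And (Rhd A C) (Rhd B C)) (Rhd (Or A B) C))
| ax_J4m A : IL_J2p_J5 (Iff (Box (Neg A)) (Rhd A Bot))
| ax_J2p A B C : IL_J2p_J5 (Imp (And (Rhd A (Or B C)) (Rhd B C)) (Rhd A C))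
| ax_J5 A : IL_J2p_J5 (Rhd (Dia A) A)
| r_MP A B : IL_J2p_J5 (Imp A B) -> IL_J2p_J5 A -> IL_J2p_J5 B
| r_Nec A : IL_J2p_J5 A -> IL_J2p_J5 (Box A)
| r_R1 A B C : IL_J2p_J5 (Imp A B) -> IL_J2p_J5 (Imp (Rhd C A) (Rhd C B))
| r_R2 A B C : IL_J2p_J5 (Imp A B) -> IL_J2p_J5 (Imp (Rhd B C) (Rhd A C)).

Definition transitive_rel {W : Type} (R : W -> W -> Prop) : Prop :=
  forall x y z, R x y -> R y z -> R x z.

Definition simplified_frame (W : Type) (R S : W -> W -> Prop) : Prop :=
  inhabited W /\
  transitive_rel R /\
  well_founded (fun y x => R x y) (* R conversely well-founded *) /\
  transitive_rel S /\
  (forall x y, R x y -> S x y).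

Fixpoint forces {W : Type} (R S : W -> W -> Prop) (V : nat -> W -> Prop)
  (x : W) (A : formula) : Prop :=
  match A with
  | Var p => V p x
  | Top => True
  | Bot => False
  | Imp B C => forces R S V x B -> forces R S V x C
  | Or B C => forces R S V x B \/ forces R S V x C
  | And B C => forces R S V x B /\ forces R S V x C
  | Box B => forall y, R x y -> forces R S V y B
  | Rhd B C => forall y, R x y -> forces R S V y B ->
                 exists z, R x z /\ S y z /\ forces R S V z C
  end.

Definition valid_in_frame {W : Type} (R S : W -> W -> Prop) (A : formula) : Prop :=
  forall (V : nat -> W -> Prop) (x : W), forces R S V x A.

(* Main.v *)
Require Import Defs.
From mathcomp Require Import all_boot.
From mathcomp Require Import zify.
From Stdlib Require Import Classical ClassicalEpsilon.

Set Implicit Arguments.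
Unset Strict Implicit.

Definition dec (P : Prop) : bool :=
  if excluded_middle_informative P then true else false.

Lemma decP (P : Prop) : reflect P (dec P).
Proof. rewrite /dec; case: excluded_middle_informative => h; by constructor. Qed.

Section Sound.
Variables (W : Type) (R S : W -> W -> Prop).
Hypothesis F : simplified_frame R S.

Lemma peval_forces V x A :
  peval (fun B => dec (forces R S V x B)) A <-> forces R S V x A.
Proof.
elim: A => [n| | |B IB C IC|B IB C IC|B IB C IC|B|B C] /=.
- by split => [/decP|/decP].
- by [].
- by split.
- split.
  + case/orP => [/negP hB|/IC hC] hb; last by [].
    by exfalso; apply: hB; apply/IB.
  + move=> h. case: (classic (forces R S V x B)) => hb.
    * by apply/orP; right; apply/IC; apply: h.
    * by apply/orP; left; apply/negP => /IB.
- split.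
  + case/orP => [/IB|/IC]; by [left|right].
  + by case => [/IB ->| /IC ->]; rewrite ?orbT.
- split.
  + by case/andP => /IB ? /IC ?.
  + by case => /IB -> /IC ->.
- by split => [/decP|/decP].
- by split => [/decP|/decP].
Qed.

Lemma sound A : IL_J2p_J5 A -> forall V x, forces R S V x A.
Proof.
case: F => _ [Rt [Rwf [St RS]]].
elim => {A} /=.
- move=> A ht V x. apply/peval_forces. exact: ht.
- move=> A B V x h1 h2 y xy. exact: (h1 y xy (h2 y xy)).
- move=> A V x h.
  have: forall y, R x y -> forces R S V y A.
    move=> y. elim/(well_founded_ind Rwf): y => y IH xy.
    apply: (h y xy) => z yz. apply: IH => //. exact: (Rt _ _ _ xy yz).
  by [].
- move=> A B C V x [h1 h2] y xy [hA|hB]; [exact: h1 | exact: h2].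
- move=> A V x; split.
  + move=> h y xy hA. by exfalso; apply: (h y xy hA).
  + move=> h y xy hA. by case: (h y xy hA) => z [_ [_ []]].
- move=> A B C V x [h1 h2] y xy hA.
  case: (h1 y xy hA) => z [xz [yz [hB|hC]]].
  + case: (h2 z xz hB) => u [xu [zu hu]]. exists u; split => //; split => //.
    exact: (St _ _ _ yz zu).
  + by exists z.
- move=> A V x y xy hd.
  case: (classic (exists z, R y z /\ forces R S V z A)) => [[z [yz hz]]|hn].
  + exists z; split; first exact: (Rt _ _ _ xy yz). by split; [apply: RS|].
  + exfalso; apply: hd => z yz hz. by apply: hn; exists z.
- move=> A B _ IH1 _ IH2 V x. exact: (IH1 V x (IH2 V x)).
- move=> A _ IH V x y _. exact: IH.
- move=> A B C _ IH V x h y xy hC. case: (h y xy hC) => z [xz [yz hz]].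
  exists z; split => //; split => //. exact: (IH V z hz).
- move=> A B C _ IH V x h y xy hA. exact: (h y xy (IH V y hA)).
Qed.
End Sound.

Definition Hf : formula :=
  And (Dia Top) (And (Rhd Top (Dia Top)) (Box (Imp (Dia Top) (Neg (Rhd Top Top))))).
Definition Af : formula := Neg Hf.

Definition Rc (a b : option nat) : Prop :=
  match a, b with
  | None, Some _ => True
  | Some i, Some j => exists n, i = 2 * n /\ j = 2 * n + 1
  | _, _ => False
  end.
Definition Sc (a b : option nat) : Prop :=
  match a, b with
  | None, Some _ => True
  | Some i, Some j => (i < j)%N
  | _, _ => False
  end.

Lemma Rc_frame : simplified_frame Rc Sc.
Proof.
split; first by constructor; exact: None.
split.
  case=> [i|] [j|] [k|] //=.
  move=> [n [-> ->]] [m [h _]]. exfalso; lia.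
split.
  have hodd : forall j, (forall k, Rc (Some j) k -> False) -> Acc (fun y x => Rc x y) (Some j).
    move=> j h; constructor => y hy. exfalso. exact: h hy.
  have hS : forall i, Acc (fun y x => Rc x y) (Some i).
    move=> i; constructor; case=> [j|] /=; last by move=> [].
    move=> [n [_ ->]].
    apply: hodd; case=> [k|] /=; last by [].
    move=> [m [h _]]. exfalso; lia.
  case=> [i|]; first exact: hS.
  constructor; case=> [j|] /= => [_|[]]; exact: hS.
split.
  case=> [i|] [j|] [k|] //=. move=> h1 h2. lia.
case=> [i|] [j|] //= [n [-> ->]]. lia.
Qed.

Lemma Af_not_provable : ~ IL_J2p_J5 Af.
Proof.
move=> h. have := sound Rc_frame h (fun _ _ => True) None. apply.
rewrite /Hf /=. split; last split.
- move=> hn. exact: (hn (Some 0) I I).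
- case=> [i|] // _ _. exists (Some (2 * (i + 1))); split => //; split => /=.
  + lia.
  + move=> hn. apply: (hn (Some (2 * (i + 1) + 1))) => //. by exists (i + 1).
- case=> [i|] // _ hd hr. apply: hd => w hw _.
  case: (hr w hw I) => z [hz [hwz _]].
  case: w hw hwz => [w|] //=; case: z hz => [z|] //= [n [e1 e2]] [m [e3 e4]].
  lia.
Qed.

Lemma Af_valid (W : finType) (R S : W -> W -> Prop) :
  simplified_frame R S -> valid_in_frame R S Af.
Proof.
case=> _ [Rt [_ [St RS]]] V x /= [hD [hRT hBX]].
pose T (a : W) : {set W} := [set b | dec (R x b /\ S a b)].
have inT a b : (b \in T a) <-> (R x b /\ S a b).
  by rewrite inE; split => [/decP | ?]; [|apply/decP].
have [a0 xa0] : exists a0, R x a0.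
  apply: NNPP => hn. apply: hD => y xy _. by apply: hn; exists y.
pose P := fun n => [exists a, dec (R x a) && (#|T a| == n)].
have exP : exists n, P n.
  exists #|T a0|. apply/existsP; exists a0. apply/andP; split => //. exact/decP.
case: (ex_minnP exP) => m /existsP [a /andP [/decP xa /eqP ha]] hmin.
case: (hRT a xa I) => b [xb [ab hb]].
have refl : forall y, R b y -> S y y.
  move=> y by_.
  have xy : R x y by exact: Rt _ _ _ xb by_.
  have yTa : y \in T a by apply/inT; split => //; apply: St ab (RS _ _ by_).
  have sub : T y \subset T a.
    apply/subsetP => c /inT [xc yc]. apply/inT; split => //.
    exact: (St _ _ _ ab (St _ _ _ (RS _ _ by_) yc)).
  have le : (#|T a| <= #|T y|)%N.
    rewrite ha. apply: hmin. apply/existsP; exists y.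
    apply/andP; split; [exact/decP | by []].
  have /eqP eq : T y == T a by rewrite eqEcard sub le.
  by move: yTa; rewrite -eq => /inT [].
apply: (hBX b xb hb) => y by_ _. exists y; split => //; split => //.
exact: refl.
Qed.

Theorem corollary3p4 :
  exists A : formula,
    ~ IL_J2p_J5 A /\
    (forall (W : finType) (R S : W -> W -> Prop),
        simplified_frame R S -> valid_in_frame R S A).
Proof.
exists Af; split; [exact: Af_not_provable | exact: Af_valid].
Qed.
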